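(* Let $(\boldsymbol{x}_i)_{i\geq 0}$ be the two-dimensional Sobol' sequence in $[0,1]^2$, and for $n\geq 1$ let $P_n=(\boldsymbol{x}_i)_{0\leq i<n}$ and $q(P_n)=\frac{1}{2}\min_{0\leq i<j<n}\|\boldsymbol{x}_i-\boldsymbol{x}_j\|$, where $\|\cdot\|$ is the Euclidean norm. If $n=2^{m}-1$ where $m=2^w-1$ for some integer $w>1$, then \[ q(P_n)=\frac{1}{\sqrt{2}(n+1)}. \]
   Context: The two-dimensional Sobol' sequence is defined as follows. For a non-negative integer $n$ with binary expansion $n=n_0+n_1 2+n_2 2^2+\cdots$ ($n_k\in\{0,1\}$, finitely many nonzero), the $n$-th point is $\boldsymbol{x}_n=(x_{n,1},x_{n,2})$ with $x_{n,j}=\sum_{k\geq 1} x_{n,j,k}2^{-k}$, where $(x_{n,j,1},x_{n,j,2},\ldots)^\top = C_j (n_0,n_1,n_2,\ldots)^\top \bmod 2$ (componentwise), for $j=1,2$. The infinite generating matrices $C_1=(c^{(1)}_{i,k})_{i,k\geq 1}$ and $C_2=(c^{(2)}_{i,k})_{i,k\geq1}$ are given by $c^{(1)}_{i,k}=1$ if $i=k$ and $0$ otherwise (identity matrix), and $c^{(2)}_{i,k}=\binom{k-1}{i-1}\bmod 2$ (Pascal matrix over $\mathbb{F}_2$), with the convention $\binom{a}{b}=0$ if $a<b$. The sequence is indexed starting from $\boldsymbol{x}_0$. *)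

(* Defs.v *)
From HB Require Import structures.
From mathcomp Require Import all_boot all_order all_algebra.
From mathcomp Require Import reals.
Set Implicit Arguments. Unset Strict Implicit. Unset Printing Implicit Defensive.
Import Order.TTheory GRing.Theory Num.Theory.
Local Open Scope ring_scope.

Definition nbit (n k : nat) : nat := odd (n %/ 2 ^ k).

(* i-th output digit (i >= 1) of the first coordinate: C_1 = identity,
   so x_{n,1,i} = n_{i-1}. *)
Definition sobol_digit1 (n i : nat) : nat := nbit n i.-1.

(* i-th output digit (i >= 1) of the second coordinate: C_2 = Pascal matrix
   mod 2, c_{i,k} = binom(k-1,i-1) mod 2, so
   x_{n,2,i} = (sum_{k>=1} binom(k-1,i-1) n_{k-1}) mod 2.
   Since n < 2^n, n_{k-1} = 0 for k-1 >= n, so the sum over k-1 < n is exact. *)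
Definition sobol_digit2 (n i : nat) : nat :=
  (\sum_(k < n) 'C(k, i.-1) * nbit n k)%N %% 2.

(* x_{n,j} = sum_{i>=1} x_{n,j,i} 2^{-i}; all digits with i > n vanish
   (both for C_1 and C_2), so summing over 1 <= i <= n is exact. *)
Definition sobol1 (R : realType) (n : nat) : R :=
  \sum_(1 <= i < n.+1) (sobol_digit1 n i)%:R / 2 ^+ i.
Definition sobol2 (R : realType) (n : nat) : R :=
  \sum_(1 <= i < n.+1) (sobol_digit2 n i)%:R / 2 ^+ i.

Definition sobol_dist (R : realType) (i j : nat) : R :=
  Num.sqrt ((sobol1 R i - sobol1 R j) ^+ 2 + (sobol2 R i - sobol2 R j) ^+ 2).

Definition pair_dists (R : realType) (n : nat) : seq R :=
  [seq sobol_dist R p.1 p.2 |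
     p <- [seq (i, j) | i <- iota 0 n, j <- iota 0 n] & (p.1 < p.2)%N].

(* q(P_n) = 1/2 * min_{0<=i<j<n} ||x_i - x_j|| (meaningful for n >= 2, where
   the list is nonempty; the fold is seeded with an element of the list). *)
Definition sep_radius (R : realType) (n : nat) : R :=
  let s := pair_dists R n in
  2^-1 * \big[Num.min/head 0 s]_(d <- s) d.

(* Main.v *)
Require Import Defs.
From HB Require Import structures.
From mathcomp Require Import all_boot all_order all_algebra.
From mathcomp Require Import reals.
From mathcomp Require Import zify ring lra.
Import Order.TTheory GRing.Theory Num.Theory.
Set Implicit Arguments. Unset Strict Implicit. Unset Printing Implicit Defensive.

Lemma binA a t : 0 < t < 2 ^ a -> ~~ odd 'C(2 ^ a, t).
Proof.
case/andP; case: t => // t _ Ht; apply/negP => Ho.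
have := mul_bin_diag (2 ^ a) t.
move=> E.
have Hd : 2 ^ a %| t.+1 * 'C(2 ^ a, t.+1) by rewrite -E dvdn_mulr.
have Hc : coprime (2 ^ a) 'C(2 ^ a, t.+1) by apply: coprimeXl; rewrite coprime2n.
rewrite (Gauss_dvdl _ Hc) in Hd.
have := dvdn_leq (ltn0Sn t) Hd. lia.
Qed.

Lemma binB a s : s < 2 ^ a -> odd 'C((2 ^ a).-1, s).
Proof.
elim: s => [|s IH] Hs; first by rewrite bin0.
have Hp : 0 < 2 ^ a by rewrite expn_gt0.
have := binA (a := a) (t := s.+1); rewrite Hs /= => /(_ isT).
rewrite -{1}(prednK Hp) binS oddD IH ?(ltnW Hs) //.
by case: (odd _).
Qed.

Lemma hockey M s : \sum_(0 <= k < M) 'C(k, s) = 'C(M, s.+1).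
Proof.
elim: M => [|M IH]; first by rewrite big_geq.
by rewrite big_nat_recr //= IH binS.
Qed.

Lemma big_trunc (R : Type) (idx : R) (op : Monoid.law idx) (lo a N : nat) (F : nat -> R) :
  lo <= a -> a <= N -> (forall k, a <= k -> F k = idx) ->
  \big[op/idx]_(lo <= k < N) F k = \big[op/idx]_(lo <= k < a) F k.
Proof.
move=> H1 H2 H3; rewrite (@big_cat_nat _ _ _ a) //=.
rewrite [X in op _ X]big1_seq ?Monoid.mulm1 //.
by move=> i /andP[_]; rewrite mem_index_iota => /andP[Hi _]; apply: H3.
Qed.

Lemma nbit_small n k : n < 2 ^ k -> nbit n k = 0.
Proof. by move=> H; rewrite /nbit divn_small. Qed.

Lemma nbitS n k : nbit n k.+1 = nbit (n %/ 2) k.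
Proof. by rewrite /nbit expnS divnMA. Qed.

Lemma nbit_le1 n k : nbit n k <= 1.
Proof. by rewrite /nbit; case: odd. Qed.

Lemma bits_inj m n n' : n < 2 ^ m -> n' < 2 ^ m ->
  (forall k, k < m -> nbit n k = nbit n' k) -> n = n'.
Proof.
elim: m n n' => [|m IH] n n'.
  by rewrite expn0 => H1 H2 _; lia.
move=> H1 H2 H.
have E0 := H 0 (ltn0Sn m); rewrite /nbit !expn0 !divn1 in E0.
have E : n %/ 2 = n' %/ 2.
  apply: IH; first by rewrite expnS in H1; lia.
    by rewrite expnS in H2; lia.
  by move=> k Hk; rewrite -!nbitS; apply: H.
rewrite (divn_eq n 2) (divn_eq n' 2) !modn2 E.
by case: (odd n) (odd n') E0 => [] [].
Qed.

Definition T (d : nat -> nat) (m : nat) : nat :=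
  \sum_(1 <= i < m.+1) d i * 2 ^ (m - i).

Lemma T0 d : T d 0 = 0.
Proof. by rewrite /T big_geq. Qed.

Lemma TS d m : T d m.+1 = 2 * T d m + d m.+1.
Proof.
rewrite /T big_nat_recr //= subnn expn0 muln1; congr (_ + _).
rewrite big_distrr /=; apply: eq_big_nat => i /andP[_ Hi].
by rewrite subSn // expnS; ring.
Qed.

Lemma T_inj d e m : (forall i, d i <= 1) -> (forall i, e i <= 1) ->
  T d m = T e m -> forall i, 0 < i <= m -> d i = e i.
Proof.
move=> Hd He; elim: m => [|m IH] E i Hi; first by lia.
rewrite !TS in E.
have := Hd m.+1; have := He m.+1 => h1 h2.
have E1 : d m.+1 = e m.+1 by lia.
have E2 : T d m = T e m by lia.
case/andP: Hi => Hi1; rewrite leq_eqVlt => /orP[/eqP->//|Hi2].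
by apply: IH => //; rewrite Hi1.
Qed.

Lemma T_carry d e h : 0 < h ->
  (forall i, 0 < i < h -> d i = e i) -> d h = 0 -> e h = 1 ->
  (forall i, h < i -> d i = 1 /\ e i = 0) ->
  forall M, h <= M -> T e M = (T d M).+1.
Proof.
move=> Hh Hpre Hdh Heh Hpost M HM.
rewrite -(subnK HM); elim: (M - h) => [|t IH].
  case: h Hh Hpre Hdh Heh Hpost {HM} => // h _ Hpre Hdh Heh _.
  rewrite add0n !TS Hdh Heh.
  have -> : T e h = T d h.
    by apply: eq_big_nat => i /andP[Hi1 Hi2]; rewrite Hpre // Hi1.
  lia.
rewrite addSn !TS IH.
have [H1 H2] : d (t + h).+1 = 1 /\ e (t + h).+1 = 0 by apply: Hpost; lia.
rewrite H1 H2; lia.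
Qed.

Lemma pre0 (f : nat -> nat) k : \sum_(0 <= i < k) 'C(i, k) * f i = 0.
Proof. by rewrite big_nat_cond big1 // => i /andP[/andP[_ Hi] _]; rewrite bin_small. Qed.

Lemma split_at (f : nat -> nat) k m : k < m ->
  \sum_(0 <= i < m) 'C(i, k) * f i = f k + \sum_(k.+1 <= i < m) 'C(i, k) * f i.
Proof.
move=> Hk; rewrite (big_cat_nat (leq0n k) (ltnW Hk)) /= pre0 add0n big_ltn //.
by rewrite binn mul1n.
Qed.

Lemma tri (b b' : nat -> nat) m : (forall k, b k <= 1) -> (forall k, b' k <= 1) ->
  (forall r, r < m -> (\sum_(0 <= k < m) 'C(k, r) * b k) %% 2 =
                      (\sum_(0 <= k < m) 'C(k, r) * b' k) %% 2) ->
  forall k, k < m -> b k = b' k.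
Proof.
move=> Hb Hb' H.
suff S : forall t k, m - t <= k < m -> b k = b' k.
  by move=> k Hk; apply: (S m); rewrite Hk andbT; lia.
elim=> [|t IH] k /andP[Hk1 Hk2]; first by lia.
case: (leqP (m - t) k) => Hk3; first by apply: IH; rewrite Hk3.
have Ek : k = m - t.+1 by lia.
have := H k Hk2.
rewrite !split_at //.
have -> : \sum_(k.+1 <= i < m) 'C(i, k) * b i = \sum_(k.+1 <= i < m) 'C(i, k) * b' i.
  apply: eq_big_nat => i /andP[Hi1 Hi2]; rewrite IH //; rewrite Hi2; lia.
have := Hb k; have := Hb' k; lia.
Qed.

Lemma nbit_big n m k : n < 2 ^ m -> minn n m <= k -> nbit n k = 0.
Proof.
move=> Hn Hk; apply: nbit_small.
case: (leqP n m) => Hnm.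
  have : minn n m = n by lia.
  move=> E; rewrite E in Hk.
  apply: (leq_trans (ltn_expl n (ltnSn 1))); by rewrite leq_exp2l.
have : minn n m = m by lia.
move=> E; rewrite E in Hk.
by apply: (leq_trans Hn); rewrite leq_exp2l.
Qed.

Lemma digit1_zero n m i : n < 2 ^ m -> minn n m < i -> sobol_digit1 n i = 0.
Proof. by move=> Hn Hi; rewrite /sobol_digit1; apply: (nbit_big Hn); lia. Qed.

Lemma digit2_eq n m i : (n < 2 ^ m)%N ->
  sobol_digit2 n i = (\sum_(0 <= k < m) 'C(k, i.-1) * nbit n k) %% 2.
Proof.
move=> Hn; rewrite /sobol_digit2. rewrite -(big_mkord xpredT (fun k => 'C(k, i.-1) * nbit n k)).
have H : forall k, minn n m <= k -> 'C(k, i.-1) * nbit n k = 0.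
  by move=> k Hk; rewrite (nbit_big Hn Hk) muln0.
rewrite (@big_trunc _ _ _ 0 (minn n m)) ?geq_minl //.
by rewrite [in RHS](@big_trunc _ _ _ 0 (minn n m)) ?geq_minr.
Qed.

Lemma digit2_zero n m i : n < 2 ^ m -> minn n m < i -> sobol_digit2 n i = 0.
Proof.
move=> Hn Hi; rewrite (digit2_eq _ Hn) big_nat_cond big1 //.
move=> k /andP[/andP[_ Hk] _].
case: (ltnP k i.-1) => H; first by rewrite bin_small.
rewrite (nbit_big Hn) ?muln0 //; lia.
Qed.


Lemma nbit_pow p k : nbit (2 ^ p) k = (k == p).
Proof.
case: (leqP k p) => Hk.
  rewrite /nbit -expnB // oddX orbF.
  by apply/eqP; case: eqP; lia.
rewrite nbit_small; last by rewrite ltn_exp2l.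
by case: eqP => //; lia.
Qed.

Lemma nbit_m1 b q : nbit (2 ^ b - 1) q = (q < b).
Proof.
case: (ltnP q b) => Hq.
  have E : 2 ^ b - 1 = (2 ^ (b - q) - 1) * 2 ^ q + (2 ^ q - 1).
    have e : 2 ^ b = 2 ^ (b - q) * 2 ^ q by rewrite -expnD subnK // ltnW.
    have p1 : 0 < 2 ^ (b - q) by rewrite expn_gt0.
    have p2 : 0 < 2 ^ q by rewrite expn_gt0.
    rewrite e; nia.
  rewrite /nbit E divnMDl ?expn_gt0 // divn_small; last first.
    have p2 : 0 < 2 ^ q by rewrite expn_gt0. lia.
  rewrite addn0 oddB ?expn_gt0 // oddX /=.
  by have -> : (b - q == 0) = false by apply/eqP; lia.
rewrite nbit_small //.
have : 2 ^ b <= 2 ^ q by rewrite leq_exp2l.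
have : 0 < 2 ^ b by rewrite expn_gt0.
lia.
Qed.

Lemma nbit_i0 a b k : nbit (2 ^ a * (2 ^ b - 1)) k = (a <= k < a + b).
Proof.
case: (ltnP k a) => Hk.
  have E : 2 ^ a * (2 ^ b - 1) = (2 ^ (a - k) * (2 ^ b - 1)) * 2 ^ k.
    by rewrite mulnAC -expnD subnK // ltnW.
  rewrite /nbit E mulnK ?expn_gt0 // oddM oddX /=.
  have -> : (a - k == 0) = false by apply/eqP; lia.
  by [].

have E : 2 ^ k = 2 ^ a * 2 ^ (k - a) by rewrite -expnD subnKC.
rewrite /nbit E divnMl ?expn_gt0 //.
have := nbit_m1 b (k - a); rewrite /nbit => ->.
by rewrite /= ltn_subLR.
Qed.

Lemma T_ext d d' M : (forall i, 0 < i <= M -> d i = d' i) -> T d M = T d' M.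
Proof. by move=> H; apply: eq_big_nat => i /andP[Hi1 Hi2]; rewrite H // Hi1 -ltnS. Qed.

Lemma sum_single m c s : c < m ->
  \sum_(0 <= k < m) 'C(k, s) * (k == c) = 'C(c, s).
Proof.
move=> Hc; rewrite (big_cat_nat (leq0n c) (ltnW Hc)) /= [X in _ + X = _]big_ltn //.
rewrite eqxx muln1 big_nat_cond big1; last first.
  by move=> i /andP[/andP[_ Hi] _]; rewrite (_ : (i == c) = false) ?muln0 //; lia.
rewrite add0n big_nat_cond big1 ?addn0 //.
by move=> i /andP[/andP[Hi _] _]; rewrite (_ : (i == c) = false) ?muln0 //; lia.
Qed.

Lemma sum_tail m h s : h <= m ->
  \sum_(0 <= k < m) 'C(k, s) * (h <= k < m) + 'C(h, s.+1) = 'C(m, s.+1).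
Proof.
move=> Hh; rewrite -!hockey (big_cat_nat (leq0n h) Hh) /=.
rewrite [in RHS](big_cat_nat (leq0n h) Hh) /=.
rewrite big_nat_cond big1; last first.
  by move=> i /andP[/andP[_ Hi] _]; rewrite (_ : (h <= i) = false) ?muln0 //; lia.
rewrite add0n addnC; congr (_ + _).
apply: eq_big_nat => i /andP[Hi1 Hi2]; by rewrite Hi1 Hi2 muln1.
Qed.

Section Pair.
Variables (v : nat).
Hypothesis Hv : 0 < v.
Let h := 2 ^ v.
Let m := 2 ^ v.+1 - 1.
Let j0 := 2 ^ h.-1.
Let i0 := 2 ^ h * (2 ^ (m - h) - 1).

Lemma hge2 : 2 <= h.
Proof. rewrite /h; case: v Hv => // v' _; rewrite expnS; have := expn_gt0 2 v'; lia. Qed.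

Lemma mE : m = 2 * h - 1.
Proof. by rewrite /m /h expnS. Qed.

Lemma powfacts : [/\ 2 ^ m = 2 ^ h * 2 ^ (m - h), 2 <= 2 ^ (m - h),
   2 ^ h = 2 * 2 ^ h.-1 & 1 <= 2 ^ h.-1].
Proof.
have H2 := hge2; have Em := mE.
split.
- by rewrite -expnD subnKC //; lia.
- have : 2 ^ 1 <= 2 ^ (m - h) by rewrite leq_exp2l //; lia.
  by [].
- by rewrite -expnS prednK //; lia.
- by rewrite expn_gt0.
Qed.

Lemma j0_lt : j0 < 2 ^ m.
Proof. case: powfacts => e1 e2 e3 e4; rewrite /j0; nia. Qed.

Lemma i0_lt : i0 < 2 ^ m - 1.
Proof. case: powfacts => e1 e2 e3 e4; rewrite /i0; nia. Qed.

Lemma j0_i0 : j0 < i0.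
Proof. case: powfacts => e1 e2 e3 e4; rewrite /i0 /j0; nia. Qed.

Lemma d1j i : 0 < i -> sobol_digit1 j0 i = (i == h).
Proof.
move=> Hi; rewrite /sobol_digit1 /j0 nbit_pow.
have := hge2 => H2.
by rewrite -eqSS !prednK //; lia.
Qed.

Lemma d1i i : 0 < i <= m -> sobol_digit1 i0 i = (h < i).
Proof.
move=> Hi; rewrite /sobol_digit1 /i0 nbit_i0.
have H2 := hge2; have Em := mE.
rewrite subnKC; last lia.
case: (ltnP h i) => H.
  lia.
lia.
Qed.

Lemma d2j i : 0 < i <= m -> sobol_digit2 j0 i = (i <= h).
Proof.
move=> Hi; have H2 := hge2; have Em := mE.
rewrite (digit2_eq _ j0_lt).
rewrite (eq_big_nat _ _ (F2 := fun k => 'C(k, i.-1) * (k == h.-1))); last first.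
  by move=> k _; rewrite /j0 nbit_pow.
rewrite sum_single; last lia.
case: (leqP i h) => H.
  rewrite modn2 /h -(prednK (expn_gt0 2 v)) binB //.
  rewrite /h in H; lia.
by rewrite bin_small //; lia.
Qed.

Lemma d2i i : 0 < i <= m -> sobol_digit2 i0 i = (i != h).
Proof.
move=> Hi; have H2 := hge2; have Em := mE.
have i0m : i0 < 2 ^ m by have := i0_lt; lia.
rewrite (digit2_eq _ i0m).
rewrite (eq_big_nat _ _ (F2 := fun k => 'C(k, i.-1) * (h <= k < m))); last first.
  move=> k _; rewrite /i0 nbit_i0 subnKC //; lia.
have := sum_tail i.-1 (_ : h <= m); rewrite prednK; last by case/andP: Hi.
move=> /(_ ltac:(lia)) E.
have Om : odd 'C(m, i).
  rewrite /m subn1 binB //; rewrite /m in Hi; lia.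
rewrite modn2.
have := congr1 odd E; rewrite oddD Om.
case: (ltngtP i h) => H.
- rewrite (_ : odd 'C(h, i) = false); last first.
    by apply/negbTE; apply: binA; rewrite /h in H *; case/andP: Hi => -> _.
  by rewrite addbF => ->.
- by rewrite bin_small // addbF => ->.
- by rewrite H binn /=; case: odd.
Qed.

Lemma TX1 : T (sobol_digit1 j0) m = (T (sobol_digit1 i0) m).+1.
Proof.
have H2 := hge2; have Em := mE.
rewrite (@T_ext _ (fun i => nat_of_bool (i == h))); last by move=> i /andP[Hi _]; rewrite d1j.
rewrite [in RHS](@T_ext _ (fun i => nat_of_bool (h < i))); last by move=> i Hi; rewrite d1i.
apply: (@T_carry _ _ h) => //; try lia.
Qed.

Lemma TX2 : T (sobol_digit2 j0) m = (T (sobol_digit2 i0) m).+1.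
Proof.
have H2 := hge2; have Em := mE.
rewrite (@T_ext _ (fun i => nat_of_bool (i <= h))); last by move=> i Hi; rewrite d2j.
rewrite [in RHS](@T_ext _ (fun i => nat_of_bool (i != h))); last by move=> i Hi; rewrite d2i.
apply: (@T_carry _ _ h) => //; try lia.
Qed.

End Pair.

Lemma X_inj m i j : i < 2 ^ m -> j < 2 ^ m -> i != j ->
  T (sobol_digit1 i) m != T (sobol_digit1 j) m /\
  T (sobol_digit2 i) m != T (sobol_digit2 j) m.
Proof.
move=> Hi Hj Hij; split; apply/negP => /eqP E; move/negP: Hij; apply; apply/eqP.
- have H := T_inj (fun k => nbit_le1 i k.-1) (fun k => nbit_le1 j k.-1) E.
  apply: (bits_inj Hi Hj) => k Hk.
  by have := H k.+1; rewrite /sobol_digit1 /=; apply; lia.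
- have le1 : forall n k, sobol_digit2 n k <= 1.
    by move=> n k; rewrite /sobol_digit2 -ltnS ltn_pmod.
  have H := T_inj (le1 i) (le1 j) E.
  apply: (bits_inj Hi Hj).
  apply: tri; [exact: nbit_le1 | exact: nbit_le1 |].
  move=> r Hr; have := H r.+1; rewrite (digit2_eq _ Hi) (digit2_eq _ Hj) /=.
  by apply; lia.
Qed.

Local Open Scope ring_scope.


Lemma sobol_eq (R : realType) (d : nat -> nat) n m :
  (forall i, (minn n m < i)%N -> d i = 0) ->
  (\sum_(1 <= i < n.+1) (d i)%:R / 2 ^+ i : R) = (T d m)%:R / 2 ^+ m.
Proof.
move=> H.
have H' : forall i : nat, ((minn n m).+1 <= i)%N -> ((d i)%:R / 2 ^+ i : R) = 0.
  by move=> i Hi; rewrite H // mul0r.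
rewrite (@big_trunc _ _ _ 1 (minn n m).+1) // ?ltnS ?geq_minl //.
rewrite -(@big_trunc _ _ _ 1 (minn n m).+1 m.+1 (fun i => (d i)%:R / 2 ^+ i)) // ?ltnS ?geq_minr //.
rewrite /T natr_sum mulr_suml; apply: eq_big_nat => i /andP[Hi1 Hi2].
rewrite ltnS in Hi2; rewrite natrM natrX -{2}(subnK Hi2) exprD.
have h1 : (2 ^+ (m - i) : R) != 0 by rewrite expf_neq0 // pnatr_eq0.
have h2 : (2 ^+ i : R) != 0 by rewrite expf_neq0 // pnatr_eq0.
by rewrite invfM mulrA mulfK.
Qed.

Lemma sobol1E (R : realType) n m : (n < 2 ^ m)%N ->
  sobol1 R n = (T (sobol_digit1 n) m)%:R / 2 ^+ m.
Proof. by move=> Hn; apply: sobol_eq => i; apply: digit1_zero. Qed.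

Lemma sobol2E (R : realType) n m : (n < 2 ^ m)%N ->
  sobol2 R n = (T (sobol_digit2 n) m)%:R / 2 ^+ m.
Proof. by move=> Hn; apply: sobol_eq => i; apply: digit2_zero. Qed.
Local Open Scope ring_scope.

Lemma sq_ge1 (R : realType) (a b : nat) : a != b -> 1 <= ((a%:R - b%:R : R) ^+ 2).
Proof.
move=> Hab; case: (ltngtP a b) => H.
- have : (a.+1%:R : R) <= b%:R by rewrite ler_nat.
  rewrite -natr1 => H'; nra.
- have : (b.+1%:R : R) <= a%:R by rewrite ler_nat.
  rewrite -natr1 => H'; nra.
- by rewrite H eqxx in Hab.
Qed.

Lemma diff_sq (R : realType) (a b m : nat) :
  ((a%:R / 2 ^+ m - b%:R / 2 ^+ m : R) ^+ 2) = (a%:R - b%:R) ^+ 2 * ((2 ^+ m)^-1) ^+ 2.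
Proof. by rewrite -mulrBl exprMn. Qed.

Lemma dist_lb (R : realType) m i j : (i < 2 ^ m)%N -> (j < 2 ^ m)%N -> i != j ->
  Num.sqrt (((2 ^+ m : R)^-1) ^+ 2 + ((2 ^+ m : R)^-1) ^+ 2) <= sobol_dist R i j.
Proof.
move=> Hi Hj Hij; rewrite /sobol_dist; apply: ler_wsqrtr.
have [h1 h2] := X_inj Hi Hj Hij.
rewrite (sobol1E R Hi) (sobol1E R Hj) (sobol2E R Hi) (sobol2E R Hj) !diff_sq.
have c0 : 0 <= ((2 ^+ m : R)^-1) ^+ 2 by rewrite exprn_ge0 // invr_ge0 exprn_ge0.
apply: lerD; rewrite -[X in X <= _]mul1r; apply: ler_wpM2r => //; exact: sq_ge1.
Qed.

Lemma bigmin_eq (R : realType) (s : seq R) x : x \in s -> (forall y, y \in s -> x <= y) ->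
  \big[Num.min/head 0 s]_(d <- s) d = x.
Proof.
move=> Hx Hall; apply/le_anti/andP; split.
  elim: s (head 0 s) Hx {Hall} => // a s IH z; rewrite inE big_cons ge_min.
  case/orP => [/eqP->|/IH->]; by rewrite ?lexx ?orbT.
rewrite big_seq; apply: (big_ind (fun y => x <= y)).
- by case: s Hx Hall => //= a s _ H; apply: H; rewrite mem_head.
- by move=> a b Ha Hb; rewrite le_min Ha Hb.
- by move=> i Hi; apply: Hall.
Qed.

Unset Implicit Arguments.

Theorem mainTheorem1 (R : realType) (w : nat) :
  (1 < w)%N ->
  sep_radius R (2 ^ (2 ^ w - 1) - 1) =
    1 / (Num.sqrt 2 * ((2 ^ (2 ^ w - 1) - 1).+1)%:R).
Proof.
case: w => // v; rewrite ltnS => Hv.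
set m := (2 ^ v.+1 - 1)%N.
set c := ((2 ^+ m : R)^-1).
have Hm : (0 < 2 ^ m)%N by rewrite expn_gt0.
have -> : (2 ^ m - 1).+1 = (2 ^ m)%N by lia.
have E : \big[Num.min/head 0 (pair_dists R (2 ^ m - 1))]_(d <- pair_dists R (2 ^ m - 1)) d
         = Num.sqrt (c ^+ 2 + c ^+ 2).
  apply: bigmin_eq.
  - have -> : Num.sqrt (c ^+ 2 + c ^+ 2) = sobol_dist R (2 ^ (2 ^ v).-1) (2 ^ (2 ^ v) * (2 ^ (m - 2 ^ v) - 1)).
      have k : forall a : R, a + 1 - a = 1 by move=> a; rewrite addrAC subrr add0r.
      rewrite /sobol_dist (sobol1E R (j0_lt Hv)).
      have i0m : (2 ^ (2 ^ v) * (2 ^ (m - 2 ^ v) - 1) < 2 ^ m)%N.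
        have := i0_lt Hv. rewrite -/m. lia.
      rewrite (sobol1E R i0m) (sobol2E R (j0_lt Hv)) (sobol2E R i0m) !diff_sq.
      rewrite /c /m (TX1 Hv) (TX2 Hv) -!natr1 !k expr1n !mul1r.
      by [].
    rewrite /pair_dists; apply/mapP.
    exists (2 ^ (2 ^ v).-1, 2 ^ (2 ^ v) * (2 ^ (m - 2 ^ v) - 1))%N => //.
    rewrite mem_filter /=.
    have h1 := i0_lt Hv; have h2 := j0_i0 Hv; rewrite -/m in h1 h2.
    rewrite h2 /=; apply: allpairs_f; rewrite mem_iota /=; lia.
  - move=> y /mapP [[i j]] /=; rewrite mem_filter /= => /andP[Hij] /allpairsP [[a b] /= [Ha Hb E]] ->.
    case: E => Ei Ej; subst i j.
    rewrite mem_iota in Ha; rewrite mem_iota in Hb.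
    apply: dist_lb; try lia.
rewrite /sep_radius E natrX.
have c0 : 0 <= c by rewrite invr_ge0 exprn_ge0.
have e2 : c ^+ 2 + c ^+ 2 = 2 * c ^+ 2 by ring.
rewrite e2 sqrtrM // sqrtr_sqr ger0_norm // /c.
have s2 : Num.sqrt (2 : R) ^+ 2 = 2 by rewrite sqr_sqrtr.
have s0 : Num.sqrt (2 : R) != 0 by rewrite sqrtr_eq0 -ltNge.
have p0 : (2 ^+ m : R) != 0 by rewrite expf_neq0 // pnatr_eq0.
have h : (2:R)^-1 = (Num.sqrt 2 ^+ 2)^-1 by rewrite s2.
rewrite h; field; by rewrite ?s0 ?p0.
Qed.
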